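(* Let $p$ be a positive integer. Then $\mathrm{spec}_{\mathrm{imp}}(p)=\{0,1,2,\dots,p-1\}$. That is, for every integer $n$ with $0\le n\le p-1$ there exists a critical exactly $p$-improper interval graph $G$ and a vertex $v$ of $G$ such that $G-v$ is exactly $n$-improper, and every integer $n$ arising in this way (from some critical exactly $p$-improper interval graph by removing a single vertex) lies in $\{0,1,\dots,p-1\}$.
   Context: An interval graph is a graph admitting an interval representation: an assignment of a closed real interval to each vertex so that two distinct vertices are adjacent if and only if their intervals intersect. For an integer $p\ge 0$, a graph is $p$-improper (a $p$-improper interval graph) if it has an interval representation in which no interval contains more than $p$ other intervals. Every $(p-1)$-improper interval graph is also $p$-improper. A graph is exactly $p$-improper if it is $p$-improper but not $(p-1)$-improper (for $p=0$: it is $0$-improper); in particular every interval graph is exactly $n$-improper for a unique $n\ge 0$, its impropriety. A critical $p$-improper interval graph is a $p$-improper interval graph $G$ such that $G-v$ is $(p-1)$-improper for every vertex $v$ of $G$. The spectrum of impropriety $\mathrm{spec}_{\mathrm{imp}}(p)$ is the set of all integers $n$ such that some critical exactly $p$-improper interval graph $G$ has a vertex $v$ with $G-v$ exactly $n$-improper. *)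

(* Defs.v *)
From HB Require Import structures.
From mathcomp Require Import all_boot all_order all_algebra.
From mathcomp Require Import Rstruct.
From Stdlib Require Rdefinitions.
Notation R := Rdefinitions.R.
Set Implicit Arguments. Unset Strict Implicit. Unset Printing Implicit Defensive.
Import Order.TTheory GRing.Theory Num.Theory.

Definition simple_graph (T : finType) (e : rel T) : Prop :=
  symmetric e /\ irreflexive e.

(* An interval representation of the induced subgraph G[S]: vertex x in S gets
   the closed interval [l x, r x] (l x <= r x), and distinct x, y in S are
   adjacent iff their intervals intersect. *)
Definition interval_rep (T : finType) (e : rel T) (S : {set T}) (l r : T -> R) : Prop :=
  (forall x, x \in S -> (l x <= r x)%R) /\
  (forall x y, x \in S -> y \in S -> x != y ->
     (e x y <-> ((l x <= r y)%R && (l y <= r x)%R))).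

Definition n_contained (T : finType) (S : {set T}) (l r : T -> R) (x : T) : nat :=
  #|[set y in S | (y != x) && (l x <= l y)%R && (r y <= r x)%R]|.

Definition improper_on (T : finType) (e : rel T) (S : {set T}) (p : nat) : Prop :=
  exists l r : T -> R, interval_rep e S l r /\
    (forall x, x \in S -> n_contained S l r x <= p).

Definition exactly_improper_on (T : finType) (e : rel T) (S : {set T}) (p : nat) : Prop :=
  improper_on e S p /\ (0 < p -> ~ improper_on e S p.-1).

Definition critical_improper (T : finType) (e : rel T) (p : nat) : Prop :=
  improper_on e [set: T] p /\ (forall v : T, improper_on e [set~ v] p.-1).

Definition in_spec_imp (p n : nat) : Prop :=
  exists (T : finType) (e : rel T) (v : T),
    simple_graph e /\ critical_improper e p /\ exactly_improper_on e [set: T] p /\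
    exactly_improper_on e [set~ v] n.

(* Main.v *)
Require Import Defs.
From mathcomp Require Import all_boot all_order all_algebra.
From mathcomp Require Import Rstruct.
From mathcomp Require Import lra zify.
Set Implicit Arguments. Unset Strict Implicit. Unset Printing Implicit Defensive.
Import Order.TTheory GRing.Theory Num.Theory.


Section Gen.
Variables (T : finType) (e : rel T).

Lemma card_le_range (A : {set T}) (f : T -> nat) a b :
  {in A &, injective f} -> (forall x, x \in A -> a <= f x < b) -> #|A| <= b - a.
Proof.
move=> finj frange; rewrite cardE -(size_map f) -(size_iota a (b - a)).
apply: uniq_leq_size.
  rewrite map_inj_in_uniq ?enum_uniq // => x y; rewrite !mem_enum; exact: finj.
move=> z /mapP [x]; rewrite mem_enum => /frange /andP [h1 h2] ->.
rewrite mem_iota; apply/andP; split=> //; lia.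
Qed.

Lemma rep_sub (S S' : {set T}) l r :
  interval_rep e S' l r -> S \subset S' -> interval_rep e S l r.
Proof.
move=> [h1 h2] /subsetP sub; split.
  by move=> x /sub; apply: h1.
by move=> x y /sub xS /sub yS; apply: h2.
Qed.

Lemma ncont_sub (S S' : {set T}) l r x :
  S \subset S' -> n_contained S l r x <= n_contained S' l r x.
Proof.
move=> /subsetP sub; apply: subset_leq_card; apply/subsetP => y.
by rewrite !inE => /andP [/sub -> ->].
Qed.

Lemma ncont_del l r x w : w != x -> (l x <= l w)%R -> (r w <= r x)%R ->
  n_contained [set~ w] l r x <= (n_contained [set: T] l r x).-1.
Proof.
move=> wx h1 h2; rewrite /n_contained (cardsD1 w [set y in [set: T] | _]).
rewrite !inE wx h1 h2 /=; apply: subset_leq_card; apply/subsetP => y.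
by rewrite !inE => /andP [-> /andP [-> ->]]; rewrite andbT.
Qed.

Lemma improper_of (S S' : {set T}) l r q :
  interval_rep e S' l r -> S \subset S' ->
  (forall x, x \in S -> n_contained S l r x <= q) -> improper_on e S q.
Proof. by move=> h sub hc; exists l, r; split=> //; apply: rep_sub h sub. Qed.

Lemma improper_mono (S : {set T}) q q' : q <= q' -> improper_on e S q -> improper_on e S q'.
Proof.
move=> le [l [r [h hc]]]; exists l, r; split=> // x xS.
exact: leq_trans (hc x xS) le.
Qed.

Definition indep (D : {set T}) := forall x y, x \in D -> y \in D -> x != y -> ~~ e x y.

Local Open Scope ring_scope.

Lemma point_le1 (S D : {set T}) l r (t : R) : interval_rep e S l r -> D \subset S ->
  indep D -> (#|[set y in D | ((l y <= t) && (t <= r y))%R]| <= 1)%N.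
Proof.
move=> [h1 h2] /subsetP sub ind; apply/card_le1_eqP => x y.
rewrite !inE => /andP [xD /andP [x1 x2]] /andP [yD /andP [y1 y2]].
apply/eqP; apply/negPn/negP => xy.
rewrite eq_sym in xy; have /negP := ind x y xD yD xy; apply.
apply/(h2 x y (sub _ xD) (sub _ yD) xy); apply/andP; split; lra.
Qed.

Lemma notcont (S : {set T}) l r c y : interval_rep e S l r -> c \in S -> y \in S ->
  y != c -> e c y -> ~~ ((l c <= l y) && (r y <= r c)) ->
  ((l y <= l c) && (l c <= r y)) || ((l y <= r c) && (r c <= r y)).
Proof.
move=> [h1 h2] cS yS yc ecy.
have := (h2 c y cS yS); rewrite eq_sym yc => /(_ isT) [] /(_ ecy) /andP [i1 i2] _.
rewrite negb_and -!ltNge => /orP [hl|hr].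
  apply/orP; left; apply/andP; split; lra.
apply/orP; right; apply/andP; split; lra.
Qed.

Lemma star_lemma (S D : {set T}) l r c : interval_rep e S l r -> c \in S ->
  D \subset S -> c \notin D -> indep D -> (forall y, y \in D -> e c y) ->
  (#|D| <= (n_contained S l r c).+2)%N.
Proof.
move=> rep cS /subsetP sub cD ind adj.
set P1 := [set y in D | (l y <= l c) && (l c <= r y)].
set P2 := [set y in D | (l y <= r c) && (r c <= r y)].
have hP1 : (#|P1| <= 1)%N by apply: point_le1 rep _ ind; apply/subsetP.
have hP2 : (#|P2| <= 1)%N by apply: point_le1 rep _ ind; apply/subsetP.
have : D \subset [set y in S | (y != c) && (l c <= l y) && (r y <= r c)] :|: P1 :|: P2.
  apply/subsetP => y yD; have yS := sub _ yD.
  have yc : y != c by apply: contraNneq cD => <-.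
  case: (boolP ((l c <= l y) && (r y <= r c))) => hc.
    by rewrite !inE yS yc -andbA hc.
  have := notcont rep cS yS yc (adj _ yD) hc.
  by case/orP => hh; rewrite !inE yD hh ?orbT.
move/subset_leq_card => hle; apply: (leq_trans hle).
apply: (leq_trans (leq_card_setU _ _)).
apply: (leq_trans (leq_add (leq_card_setU _ _) (leqnn _))).
rewrite /n_contained; lia.
Qed.

Definition natrep (L : T -> nat) : T -> R := fun x => (L x)%:R.

Lemma ncont_nat (S : {set T}) L Rr x : n_contained S (natrep L) (natrep Rr) x =
  #|[set y in S | (y != x) && (L x <= L y)%N && (Rr y <= Rr x)%N]|.
Proof. by apply: eq_card => y; rewrite !inE /natrep !ler_nat. Qed.

Lemma rep_nat (S : {set T}) L Rr : (forall x, x \in S -> (L x <= Rr x)%N) ->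
  (forall x y, x \in S -> y \in S -> x != y -> e x y = (L x <= Rr y)%N && (L y <= Rr x)%N) ->
  interval_rep e S (natrep L) (natrep Rr).
Proof.
move=> h1 h2; split; first by move=> x /h1; rewrite /natrep ler_nat.
by move=> x y xS yS xy; rewrite /natrep !ler_nat (h2 x y xS yS xy).
Qed.

End Gen.


Section Star.
Variable p : nat.
Local Notation ST := (option 'I_(p.+2)).
Definition se : rel ST := fun x y => (x == None) != (y == None).

Lemma se_simple : simple_graph se.
Proof. by split; [move=> x y; rewrite /se eq_sym | move=> x; rewrite /se eqxx]. Qed.

Definition spos (w i : 'I_(p.+2)) : nat :=
  if (i : nat) == w then 1 else if (i : nat) == 1 then (w : nat) else i.

Lemma spos_inj w i j : i != j -> spos w i != spos w j.
Proof.
move=> ij; have : (i : nat) <> j by move=> h; move: ij; rewrite (val_inj h) eqxx.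
move=> {}ij; apply/eqP; rewrite /spos.
case: ((i : nat) =P w); case: ((j : nat) =P w); case: ((i : nat) =P 1); case: ((j:nat) =P 1); lia.
Qed.

Lemma spos_lt w i : spos w i < p.+2.
Proof. have := ltn_ord i; have := ltn_ord w; rewrite /spos; case: ((i:nat) =P w); case: ((i:nat) =P 1); lia. Qed.

Lemma spos1 w i : spos w i = 1 -> i = w.
Proof. rewrite /spos; case: ((i:nat) =P w); case: ((i:nat) =P 1); try lia; by move=> _ /val_inj. Qed.

Definition sL (w : 'I_(p.+2)) (x : ST) : nat :=
  match x with None => 2 | Some i => 3 * spos w i + 1 end.
Definition sR (w : 'I_(p.+2)) (x : ST) : nat :=
  match x with None => 3 * p + 4 | Some i => 3 * spos w i + 2 end.
Definition sl w x : R := ((sL w x)%:R)%R.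
Definition sr w x : R := ((sR w x)%:R)%R.

Lemma srep w : interval_rep se [set: ST] (sl w) (sr w).
Proof.
split.
  by move=> [i|] _; rewrite /sl /sr ler_nat /=; lia.
move=> [i|] [j|] _ _ //=; rewrite /sl /sr !ler_nat /se /=.
- move=> ij; have : i != j by apply: contraNneq ij => ->.
  move/(spos_inj w); move/eqP => hne; split => //.
  by move/andP => [h1 h2]; exfalso; apply: hne; lia.
- have := spos_lt w i; split => // _; apply/andP; lia.
- have := spos_lt w j; split => // _; apply/andP; lia.
Qed.

Lemma scount_leaf w S i : n_contained S (sl w) (sr w) (Some i) = 0.
Proof.
apply: eq_card0 => -[j|]; apply/negbTE; rewrite !inE /sl /sr !ler_nat /=; apply/negP.
  move=> /andP [_ /andP [/andP [ij h1] h2]].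
  have : i != j by apply: contraNneq ij => ->.
  by move/(spos_inj w)/eqP; lia.
by have := spos_lt w i; move=> ? /and3P [_ h1 h2]; lia.
Qed.

Definition sf (w : 'I_(p.+2)) (x : ST) : nat := match x with Some i => spos w i | None => 0 end.

Lemma sf_inj w (A : {set ST}) : None \notin A -> {in A &, injective (sf w)}.
Proof.
move=> nA [i|] [j|] //=; last by rewrite (negbTE nA).
- move=> _ _ h; apply/eqP; move: h; apply: contraPT => ij.
  have : i != j by apply: contraNneq ij => ->.
  by move/(spos_inj w)/eqP.
- by rewrite (negbTE nA).
Qed.

Lemma scount_center w : n_contained [set: ST] (sl w) (sr w) None <= p.
Proof.
rewrite /n_contained; apply: (@leq_trans (p.+1 - 1)); last lia; apply: (card_le_range (f := sf w)); first by apply: sf_inj; rewrite !inE eqxx.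
move=> [j|]; rewrite !inE /sl /sr !ler_nat /=; last by [].
by move=> /andP [h1 h2]; apply/andP; lia.
Qed.

Lemma scount_center_del w : n_contained [set~ Some w] (sl w) (sr w) None <= p.-1.
Proof.
rewrite /n_contained; apply: (@leq_trans (p.+1 - 2)); last lia; apply: (card_le_range (f := sf w)); first by apply: sf_inj; rewrite !inE eqxx.
move=> [j|]; rewrite !inE /sl /sr !ler_nat /=; last by [].
move=> /and3P [jw h1 h2].
have : spos w j != 1 by apply/eqP => /spos1 hj; move: jw; rewrite hj eqxx.
by move=> hh; apply/andP; lia.
Qed.

Lemma star_lb (S : {set ST}) l r q : interval_rep se S l r -> None \in S ->
  (q.+2 <= #|S :\ None|)%N -> q <= n_contained S l r None.
Proof.
move=> rep NS hq.
have := @star_lemma _ se S (S :\ None) l r None rep NS (subD1set _ _).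
rewrite !inE eqxx /= => /(_ isT).
have ind : indep se (S :\ None).
  by move=> [x|] [y|] //; rewrite !inE.
move=> /(_ ind); have adj : forall y, y \in S :\ None -> se None y.
  by move=> [y|]; rewrite !inE.
move=> /(_ adj) h; by move: (leq_trans hq h); rewrite !ltnS.
Qed.

Lemma cardST : #|{: ST}| = p.+3.
Proof. by rewrite card_option card_ord. Qed.

Lemma cardD1T (x : ST) : #|[set: ST] :\ x| = p.+2.
Proof. by move: (cardsD1 x [set: ST]); rewrite in_setT cardsT cardST add1n => -[] <-. Qed.

Lemma star_props : 0 < p -> simple_graph se /\ critical_improper se p /\
  exactly_improper_on se [set: ST] p /\ exactly_improper_on se [set~ Some ord0] p.-1.
Proof.
move=> p0.
have impT : improper_on se [set: ST] p.
  apply: (improper_of (srep ord0)) => // -[i|] _; first by rewrite scount_leaf.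
  exact: scount_center.
have impD : forall v : ST, improper_on se [set~ v] p.-1.
  move=> [w|].
    apply: (improper_of (srep w)); first exact: subsetT.
    move=> [i|] _; first by rewrite scount_leaf.
    exact: scount_center_del.
  apply: (improper_of (srep ord0)); first exact: subsetT.
  by move=> [i|]; rewrite ?scount_leaf // !inE eqxx.
split; first exact: se_simple.
split; first by split.
split.
  split=> // _ [l [r [rep hc]]].
  have := star_lb (q := p) rep (in_setT _).
  rewrite cardD1T => /(_ (leqnn _)) h.
  have := leq_trans h (hc None (in_setT _)); lia.
split; first exact: impD.
move=> hp [l [r [rep hc]]].
have NS : (None : ST) \in [set~ Some ord0] by rewrite !inE.
have := star_lb (q := p.-1) rep NS.
have -> : #|[set~ Some ord0] :\ (None : ST)| = p.+1.
  by move: (cardsD1 None [set~ @Some 'I_(p.+2) ord0]); rewrite NS cardsC1 cardST add1n => -[] <-.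
move=> /(_ ltac:(lia)) h.
have := leq_trans h (hc None NS); lia.
Qed.
End Star.

Theorem star_spec p : 0 < p -> in_spec_imp p p.-1.
Proof. by move=> p0; exists _, (@se p), (Some ord0); apply: star_props. Qed.


Section Spider.
Variables m k : nat.
Local Notation PT := (option (option (option (option ('I_m + 'I_k))))).

Definition cV : PT := None.
Definition sV : PT := Some None.
Definition aV : PT := Some (Some None).
Definition a'V : PT := Some (Some (Some None)).
Definition bV i : PT := Some (Some (Some (Some (inl i)))).
Definition uV j : PT := Some (Some (Some (Some (inr j)))).

Definition pe0 (x y : PT) : bool :=
  match x, y with
  | None, Some _ => true
  | Some None, Some (Some (Some (Some (inl _)))) => true
  | Some None, Some (Some None) => true
  | Some (Some None), Some (Some (Some None)) => true
  | _, _ => false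
  end.
Definition pe : rel PT := fun x y => pe0 x y || pe0 y x.

Lemma pe_simple : simple_graph pe.
Proof.
split; first by move=> x y; rewrite /pe orbC.
by move=> [[[[[i|j]|]|]|]|].
Qed.

Lemma bne i i' (hi : i < m) (hi' : i' < m) :
  bV (Ordinal hi) != bV (Ordinal hi') -> i <> i'.
Proof. by move=> h e; subst; move: h; rewrite (bool_irrelevance hi hi') eqxx. Qed.
Lemma une j j' (hj : j < k) (hj' : j' < k) :
  uV (Ordinal hj) != uV (Ordinal hj') -> j <> j'.
Proof. by move=> h e; subst; move: h; rewrite (bool_irrelevance hj hj') eqxx. Qed.
Lemma beq i i' (hi : i < m) (hi' : i' < m) : i = i' -> bV (Ordinal hi) = bV (Ordinal hi').
Proof. by move=> e; subst; rewrite (bool_irrelevance hi hi'). Qed.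
Lemma ueq j j' (hj : j < k) (hj' : j' < k) : j = j' -> uV (Ordinal hj) = uV (Ordinal hj').
Proof. by move=> e; subst; rewrite (bool_irrelevance hj hj'). Qed.

Ltac dest x := case: x => [[[[[[i hi]|[j hj]]|]|]|]|].
Ltac dest2 x := case: x => [[[[[[i' hi']|[j' hj']]|]|]|]|].
Ltac dest12 x y h := move: h; dest x; dest2 y => h.

Ltac bsolve := first [ by []
 | match goal with
 | |- true = _ => apply/esym/andP; split; lia
 | |- false = _ => apply/esym/negbTE/negP => /andP [? ?]; lia
 | |- true = _ => apply/esym; lia
 | |- false = _ => apply/esym/negbTE/negP => ?; lia
 end ].

Ltac distinct_tac xy :=
  first [ bsolve | (move: xy => /bne ?; bsolve) | (move: xy => /une ?; bsolve)
        | (by move: xy; rewrite eqxx) ].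

(* Representation 1 : left end {a', a}, right end u_0 *)
Definition L1 (x : PT) : nat := match x with
 | None => 2 | Some None => 4 | Some (Some None) => 1 | Some (Some (Some None)) => 0
 | Some (Some (Some (Some (inl i)))) => 3 * i + 7
 | Some (Some (Some (Some (inr j)))) => 3 * m + 3 * (k.-1 - j) + 8 end.
Definition R1 (x : PT) : nat := match x with
 | None => 3 * m + 3 * k + 5 | Some None => 3 * m + 5 | Some (Some None) => 4
 | Some (Some (Some None)) => 2
 | Some (Some (Some (Some (inl i)))) => 3 * i + 9
 | Some (Some (Some (Some (inr j)))) => 3 * m + 3 * (k.-1 - j) + 9 end.

Lemma rep1 : interval_rep pe [set: PT] (natrep L1) (natrep R1).
Proof.
apply: rep_nat => [x _|x y _ _ xy]; first by dest x => /=; lia.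
by dest12 x y xy; rewrite /pe /=; distinct_tac xy.
Qed.

Ltac inj_tac := case=> [[[[[[i hi]|[j hj]]|]|]|]|] [[[[[[i' hi']|[j' hj']]|]|]|]|] _ _;
  rewrite /= => h; first [ reflexivity | (apply: beq; lia) | (apply: ueq; lia) | (exfalso; lia) ].

Ltac range_tac := let y := fresh "y" in let hne := fresh "hne" in
  let h1 := fresh "h1" in let h2 := fresh "h2" in
  move=> y; rewrite in_set => /andP [_ /andP [/andP [hne h1] h2]];
  revert hne h1 h2; case: y => [[[[[[i hi]|[j hj]]|]|]|]|]; rewrite /= => hne h1 h2;
  try first [ lia | by rewrite eqxx in hne | (move: hne => /bne ?; lia) | (move: hne => /une ?; lia) ].

Ltac empty_tac := rewrite ncont_nat; apply: eq_card0; let y := fresh "y" in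
  intro y; apply/negbTE/negP; revert y; range_tac.

Definition f1 (x : PT) : nat := match x with
 | None => 3 * m + 3 * k + 10 | Some None => 0 | Some (Some None) => 3 * m + 3 * k + 11
 | Some (Some (Some None)) => 3 * m + 3 * k + 12
 | Some (Some (Some (Some (inl i)))) => i.+1
 | Some (Some (Some (Some (inr j)))) => m + 1 + (k.-1 - j) end.

Lemma cnt1_c (k0 : 0 < k) : n_contained [set: PT] (natrep L1) (natrep R1) cV <= m + k.
Proof.
rewrite ncont_nat; apply: (@leq_trans (m + k - 0)); last lia.
apply: (card_le_range (f := f1)); first by inj_tac.
range_tac.
Qed.

Lemma cnt1_s : n_contained [set: PT] (natrep L1) (natrep R1) sV <= m.-1.
Proof.
rewrite ncont_nat; apply: (@leq_trans (m - 1)); last lia.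
apply: (card_le_range (f := f1)); first by inj_tac.
range_tac.
Qed.

Lemma cnt1_0 S x : x != cV -> x != sV -> n_contained S (natrep L1) (natrep R1) x = 0.
Proof.
case: x => [[[[[[i0 hi0]|[j0 hj0]]|]|]|]|] // _ _; empty_tac.
Qed.

(* Representation 2 : left end {b_0, s}, right end u_(k-1) *)
Definition L2 (x : PT) : nat := match x with
 | None => 1 | Some None => 0 | Some (Some None) => 3 * m | Some (Some (Some None)) => 3 * m + 2
 | Some (Some (Some (Some (inl i)))) => 3 * i
 | Some (Some (Some (Some (inr j)))) => 3 * m + 3 * j + 5 end.
Definition R2 (x : PT) : nat := match x with
 | None => 3 * m + 3 * k + 2 | Some None => 3 * m | Some (Some None) => 3 * m + 2
 | Some (Some (Some None)) => 3 * m + 3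
 | Some (Some (Some (Some (inl i)))) => 3 * i + 1
 | Some (Some (Some (Some (inr j)))) => 3 * m + 3 * j + 6 end.

Lemma rep2 (m0 : 0 < m) : interval_rep pe [set: PT] (natrep L2) (natrep R2).
Proof.
apply: rep_nat => [x _|x y _ _ xy]; first by dest x => /=; lia.
by dest12 x y xy; rewrite /pe /=; distinct_tac xy.
Qed.

Definition f2 (x : PT) : nat := match x with
 | None => 3 * m + 3 * k + 11 | Some None => 3 * m + 3 * k + 10 | Some (Some None) => m
 | Some (Some (Some None)) => m + 1
 | Some (Some (Some (Some (inl i)))) => i
 | Some (Some (Some (Some (inr j)))) => m + 2 + j end.

Lemma cnt2_c : n_contained [set: PT] (natrep L2) (natrep R2) cV <= m + k.
Proof.
rewrite ncont_nat; apply: (@leq_trans ((m + k).+1 - 1)); last lia.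
apply: (card_le_range (f := f2)); first by inj_tac.
range_tac.
Qed.

Lemma cnt2_s : n_contained [set: PT] (natrep L2) (natrep R2) sV <= m.
Proof.
rewrite ncont_nat; apply: (@leq_trans (m - 0)); last lia.
apply: (card_le_range (f := f2)); first by inj_tac.
range_tac.
Qed.

Lemma cnt2_0 (m0 : 0 < m) S x : x != cV -> x != sV -> n_contained S (natrep L2) (natrep R2) x = 0.
Proof.
case: x => [[[[[[i0 hi0]|[j0 hj0]]|]|]|]|] // _ _; empty_tac.
Qed.

(* Representation 3 : for k = 1, no isolated vertex *)
Definition S3 : {set PT} := [set x | match x with Some (Some (Some (Some (inr _)))) => false | _ => true end].

Definition L3 (x : PT) : nat := match x with
 | None => 2 | Some None => 4 | Some (Some None) => 1 | Some (Some (Some None)) => 0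
 | Some (Some (Some (Some (inl i)))) => 3 * i + 5
 | Some (Some (Some (Some (inr j)))) => 0 end.
Definition R3 (x : PT) : nat := match x with
 | None => 3 * m + 3 | Some None => 3 * m + 4 | Some (Some None) => 4
 | Some (Some (Some None)) => 2
 | Some (Some (Some (Some (inl i)))) => 3 * i + 6
 | Some (Some (Some (Some (inr j)))) => 3 * m + 10 end.

Lemma rep3 (m0 : 0 < m) : interval_rep pe S3 (natrep L3) (natrep R3).
Proof.
apply: rep_nat => [x _|x y xS yS xy]; first by dest x => /=; lia.
move: xS yS; dest12 x y xy; rewrite !inE //= => _ _; rewrite /pe /=; distinct_tac xy.
Qed.

Definition f3 (x : PT) : nat := match x with
 | None => m + 1 | Some None => m | Some (Some None) => m + 2
 | Some (Some (Some None)) => m + 3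
 | Some (Some (Some (Some (inl i)))) => i
 | Some (Some (Some (Some (inr j)))) => m + 4 + j end.

Lemma cnt3_c S : n_contained S (natrep L3) (natrep R3) cV <= m.
Proof.
rewrite ncont_nat; apply: (@leq_trans (m - 0)); last lia.
apply: (card_le_range (f := f3)); first by inj_tac.
range_tac.
Qed.

Lemma cnt3_s S : n_contained S (natrep L3) (natrep R3) sV <= m.
Proof.
rewrite ncont_nat; apply: (@leq_trans (m - 0)); last lia.
apply: (card_le_range (f := f3)); first by inj_tac.
range_tac.
Qed.

Lemma cnt3_0 (m0 : 0 < m) S x : x != cV -> x != sV -> x \in S3 -> n_contained S (natrep L3) (natrep R3) x = 0.
Proof.
rewrite inE; case: x => [[[[[[i0 hi0]|[j0 hj0]]|]|]|]|] // _ _ _; empty_tac.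
Qed.

Lemma cardPT : #|{: PT}| = m + k + 4.
Proof. by rewrite !card_option card_sum !card_ord; lia. Qed.

Lemma H_lb l r : interval_rep pe [set~ cV] l r -> m.-1 <= n_contained [set~ cV] l r sV.
Proof.
move=> rep.
set D := aV |: (bV @: [set: 'I_m]).
have cD : #|D| = m.+1.
  rewrite cardsU1 card_imset; last by move=> i j [].
  rewrite cardsT card_ord; have -> : aV \notin bV @: [set: 'I_m] by apply/imsetP => -[i _].
  by [].
have sS : sV \in [set~ cV] by rewrite !inE.
have sub : D \subset [set~ cV].
  by apply/subsetP => x; rewrite !inE => /orP [/eqP -> //|/imsetP [i _ ->]].
have sD : sV \notin D by rewrite !inE; apply/imsetP => -[i _].
have ind : indep pe D.
  move=> x y; rewrite !inE => /orP [/eqP ->|/imsetP [i _ ->]] /orP [/eqP ->|/imsetP [j _ ->]] //.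
have adj : forall y, y \in D -> pe sV y.
  by move=> y; rewrite !inE => /orP [/eqP ->|/imsetP [i _ ->]].
have := star_lemma rep sS sub sD ind adj; rewrite cD; lia.
Qed.

Lemma c1 (x : PT) : #|[set x]| <= 1.
Proof. by rewrite cards1. Qed.

Lemma card3 (A B C : {set PT}) : #|A| <= 1 -> #|B| <= 1 -> #|C| <= 1 -> #|A :|: B :|: C| <= 3.
Proof.
move=> hA hB hC; apply: (leq_trans (leq_card_setU _ _)).
apply: (@leq_trans (2 + #|C|)); last lia.
by apply: leq_add => //; apply: (leq_trans (leq_card_setU _ _)); lia.
Qed.

Local Open Scope ring_scope.

Lemma mixed_contra (ls rs la ra lc rc lu ru : R) : ls <= lc <= rs -> la <= rc <= ra ->
  lu <= ru -> lc <= ru -> lu <= rc -> (ru < ls \/ rs < lu) -> (ru < la \/ ra < lu) -> ls <= ra -> la <= rs -> False.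
Proof. move=> /andP [? ?] /andP [? ?] ? ? ? [?|?] [?|?] ? ?; lra. Qed.

Lemma sigma_lb (k0 : (0 < k)%N) l r : interval_rep pe [set: PT] l r ->
  (m + k <= n_contained [set: PT] l r cV)%N.
Proof.
move=> rep; have [h1 h2] := rep.
have I x y : x != y -> (pe x y <-> (l x <= r y) && (l y <= r x)).
  by move=> xy; apply: h2; rewrite ?in_setT.
set C := [set y in [set: PT] | (y != cV) && (l cV <= l y) && (r y <= r cV)].
rewrite /n_contained -/C.
set H := [set~ cV].
have cardH : #|H| = (m + k + 3)%N by rewrite cardsC1 cardPT; lia.
have CH : C \subset H by apply/subsetP => y; rewrite !inE => /andP [_ /andP [/andP [-> _] _]].
have eH : #|H| = (#|C| + #|H :\: C|)%N by rewrite -(cardsID C H) (setIidPr CH).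
suff : (#|H :\: C| <= 3)%N by lia.
set Y := [set y : PT | match y with None | Some None | Some (Some None) => false | _ => true end].
have indY : indep pe Y.
  by move=> x y; rewrite !inE; case: x => [[[[[i|j]|]|]|]|]; case: y => [[[[[i2|j2]|]|]|]|].
set YL := [set y in Y | (l y <= l cV) && (l cV <= r y)].
set YR := [set y in Y | (l y <= r cV) && (r cV <= r y)].
have hYL : (#|YL| <= 1)%N := point_le1 (l cV) rep (subsetT Y) indY.
have hYR : (#|YR| <= 1)%N := point_le1 (r cV) rep (subsetT Y) indY.
have pec y : y != cV -> pe cV y by case: y.
have key y : y \in H :\: C ->
  ((l y <= l cV) && (l cV <= r y)) || ((l y <= r cV) && (r cV <= r y)).
  rewrite !inE => /andP [hC yc]; apply: (notcont rep) => //; first exact: pec.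
  by move: hC; rewrite yc.
have key2 y : y \in H :\: C -> y != sV -> y != aV -> y \in YL :|: YR.
  move=> yX ys ya; have yc : y != cV by move: yX; rewrite !inE => /andP [_ ->].
  have := key y yX; rewrite !inE; move: ys ya yc.
  by case: y {yX} => [[[[[i|j]|]|]|]|].
have sY : sV \notin Y by rewrite !inE.
have aY : aV \notin Y by rewrite !inE.
have adjY y : y \in Y -> pe sV y -> pe aV y -> False.
  by rewrite !inE; case: y => [[[[[i|j]|]|]|]|].
set u0 := uV (Ordinal k0).
have uc : pe cV u0 by [].
have us : ~~ pe sV u0 by [].
have ua : ~~ pe aV u0 by [].
have sa : pe sV aV by [].
move: (I cV u0 isT) => [/(_ uc) /andP [uc1 uc2] _].
have us' : ~~ ((l sV <= r u0) && (l u0 <= r sV)).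
  by apply/negP => /(I sV u0 isT).2; apply/negP.
have ua' : ~~ ((l aV <= r u0) && (l u0 <= r aV)).
  by apply/negP => /(I aV u0 isT).2; apply/negP.
move: (I sV aV isT) => [/(_ sa) /andP [sa1 sa2] _].
have hsu := h1 u0 (in_setT _).
have us'' : (r u0 < l sV) \/ (r sV < l u0).
  by move: us'; rewrite negb_and -!ltNge => /orP [] ?; [left|right].
have ua'' : (r u0 < l aV) \/ (r aV < l u0).
  by move: ua'; rewrite negb_and -!ltNge => /orP [] ?; [left|right].
case: (boolP (sV \in H :\: C)) => sX; last first.
  apply: (leq_trans _ (card3 (c1 aV) hYL hYR)).
  apply: subset_leq_card; apply/subsetP => y yX.
  case: (eqVneq y aV) => [->|ya]; first by rewrite !inE eqxx.
  have ys : y != sV by apply: contraNneq sX => <-.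
  by have := key2 y yX ys ya; rewrite !inE => /orP [] ->; rewrite ?orbT.
case: (boolP (aV \in H :\: C)) => aX; last first.
  apply: (leq_trans _ (card3 (c1 sV) hYL hYR)).
  apply: subset_leq_card; apply/subsetP => y yX.
  case: (eqVneq y sV) => [->|ys]; first by rewrite !inE eqxx.
  have ya : y != aV by apply: contraNneq aX => <-.
  by have := key2 y yX ys ya; rewrite !inE => /orP [] ->; rewrite ?orbT.
have := key _ sX; have := key _ aX.
case/orP => /andP [a1 a2]; case/orP => /andP [s1 s2].
-
  apply: (leq_trans _ (card3 (c1 sV) (c1 aV) hYR)).
  apply: subset_leq_card; apply/subsetP => y yX.
  case: (eqVneq y sV) => [->|ys]; first by rewrite !inE eqxx.
  case: (eqVneq y aV) => [->|ya]; first by rewrite !inE eqxx orbT.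
  have := key2 y yX ys ya; rewrite !inE => /orP [/andP [yY /andP [y1 y2]]|->]; last by rewrite orbT.
  exfalso; apply: (adjY y); first by rewrite inE.
    apply/(I sV y _).2; first by rewrite eq_sym. apply/andP; split; lra.
  apply/(I aV y _).2; first by rewrite eq_sym. apply/andP; split; lra.
- exfalso; apply: (mixed_contra (ls := l aV) (rs := r aV) (la := l sV) (ra := r sV)
    (lc := l cV) (rc := r cV) (lu := l u0) (ru := r u0)) => //; by apply/andP.
- exfalso; apply: (mixed_contra (ls := l sV) (rs := r sV) (la := l aV) (ra := r aV)
    (lc := l cV) (rc := r cV) (lu := l u0) (ru := r u0)) => //; by apply/andP.
- apply: (leq_trans _ (card3 (c1 sV) (c1 aV) hYL)).
  apply: subset_leq_card; apply/subsetP => y yX.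
  case: (eqVneq y sV) => [->|ys]; first by rewrite !inE eqxx.
  case: (eqVneq y aV) => [->|ya]; first by rewrite !inE eqxx orbT.
  have := key2 y yX ys ya; rewrite !inE => /orP [->|/andP [yY /andP [y1 y2]]]; first by rewrite orbT.
  exfalso; apply: (adjY y); first by rewrite inE.
    apply/(I sV y _).2; first by rewrite eq_sym. apply/andP; split; lra.
  apply/(I aV y _).2; first by rewrite eq_sym. apply/andP; split; lra.
Qed.

Local Close Scope ring_scope.

Lemma crit_gen L R v q : interval_rep pe [set: PT] (natrep L) (natrep R) ->
  (forall S x, x != cV -> x != sV -> n_contained S (natrep L) (natrep R) x = 0) ->
  n_contained [set: PT] (natrep L) (natrep R) sV <= q ->
  n_contained [set: PT] (natrep L) (natrep R) cV <= q.+1 ->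
  v != cV -> L cV <= L v -> R v <= R cV -> improper_on pe [set~ v] q.
Proof.
move=> rep h0 hs hc vc h1 h2; apply: (improper_of rep (subsetT _)) => x xS.
case: (eqVneq x cV) => [->|xc].
  have h1' : (natrep L cV <= natrep L v)%R by rewrite /natrep ler_nat.
  have h2' : (natrep R v <= natrep R cV)%R by rewrite /natrep ler_nat.
  apply: leq_trans (ncont_del vc h1' h2') _.
  by move: hc; case: (n_contained _ _ _ _).
case: (eqVneq x sV) => [->|xs]; last by rewrite h0.
exact: leq_trans (ncont_sub _ _ _ (subsetT _)) hs.
Qed.

Lemma H_ub : improper_on pe [set~ cV] m.-1.
Proof.
apply: (improper_of rep1 (subsetT _)) => x xS.
have xc : x != cV by move: xS; rewrite !inE.
case: (eqVneq x sV) => [->|xs]; last by rewrite cnt1_0.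
exact: leq_trans (ncont_sub _ _ _ (subsetT _)) cnt1_s.
Qed.

Theorem spider_props (m0 : 0 < m) (k0 : 0 < k) : simple_graph pe /\ critical_improper pe (m + k) /\
  exactly_improper_on pe [set: PT] (m + k) /\ exactly_improper_on pe [set~ cV] m.-1.
Proof.
have impT : improper_on pe [set: PT] (m + k).
  apply: (improper_of rep1 (subxx _)) => x _.
  case: (eqVneq x cV) => [->|xc]; first exact: cnt1_c.
  case: (eqVneq x sV) => [->|xs]; last by rewrite cnt1_0.
  apply: leq_trans cnt1_s _; lia.
split; first exact: pe_simple.
split.
  split=> // v.
  have c1 : forall v, v != cV -> L1 cV <= L1 v -> R1 v <= R1 cV -> improper_on pe [set~ v] (m + k).-1.
    move=> w; apply: crit_gen rep1 cnt1_0 _ _; first by apply: leq_trans cnt1_s _; lia.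
    by apply: leq_trans (cnt1_c k0) _; lia.
  have c2 : forall v, v != cV -> L2 cV <= L2 v -> R2 v <= R2 cV -> improper_on pe [set~ v] (m + k).-1.
    move=> w; apply: crit_gen (rep2 m0) (cnt2_0 m0) _ _; first by apply: leq_trans cnt2_s _; lia.
    by apply: leq_trans cnt2_c _; lia.
  case: v => [[[[[[i hi]|[j hj]]|]|]|]|].
  - by apply: c1 => //=; lia.
  - case: (posnP j) => [j0|jp]; last by apply: c1 => //=; lia.
    case: (ltnP 1 k) => [k2|k1].
      by apply: c2 => //=; lia.
    have k1' : k = 1 by lia.
    have sub : [set~ uV (Ordinal hj)] \subset S3.
      apply/subsetP => x; rewrite !inE; case: x => [[[[[[i hi]|[j' hj']]|]|]|]|] //.
      have e : uV (Ordinal hj') = uV (Ordinal hj) by apply: ueq; lia.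
      by move: e; rewrite /uV => ->; rewrite eqxx.
    apply: (improper_of (rep3 m0) sub) => x xS.
    have hm : m = (m + k).-1 by lia.
    case: (eqVneq x cV) => [->|xc]; first by rewrite -hm cnt3_c.
    case: (eqVneq x sV) => [->|xs]; first by rewrite -hm cnt3_s.
    by rewrite (cnt3_0 m0 _ xc xs) // (subsetP sub).
  - by apply: c2 => //=; lia.
  - by apply: c2 => //=; lia.
  - by apply: c1 => //=; lia.
  - by apply: improper_mono H_ub; lia.
split.
  split=> // _ [l [r [rep hc]]].
  have := leq_trans (sigma_lb k0 rep) (hc cV (in_setT _)); lia.
split; first exact: H_ub.
move=> hm [l [r [rep hc]]].
have cS : sV \in [set~ cV] by rewrite !inE.
have := leq_trans (H_lb rep) (hc sV cS); lia.
Qed.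

End Spider.


Theorem theorem1 (p : nat) : 0 < p ->
  forall n : nat, in_spec_imp p n <-> n < p.
Proof.
move=> p0 n; split.
  move=> [T [e [v [_ [[_ crit] [_ [impn exn]]]]]]].
  rewrite ltnNge; apply/negP => pn.
  have n0 : 0 < n by lia.
  apply: (exn n0); apply: improper_mono (crit v); lia.
move=> np.
case: (eqVneq n p.-1) => [->|nne]; first exact: star_spec.
have hp : n.+1 + (p - n.+1) = p by lia.
have := @spider_props n.+1 (p - n.+1) isT ltac:(lia).
rewrite hp => -[hs [hc [he hH]]].
by exists _, (@pe n.+1 (p - n.+1)), (@cV n.+1 (p - n.+1)).
Qed.
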